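(* Let $(C,\mathfrak p,\mathfrak d)$ be a regular $q$-cycle coalgebra. Then $\mathfrak d_{10}^1=\mathfrak p_{10}^1=1$ or $\mathfrak d_{11}^1=\mathfrak p_{11}^1=0$.
   Context: $K$ is an algebraically closed field of characteristic $0$ and $n\ge2$. $C$ is the coalgebra dual to $K[y]/\langle y^n\rangle$: basis $x_0,\dots,x_{n-1}$, $\Delta(x_i)=\sum_{j+k=i}x_j\otimes x_k$, $\epsilon(x_i)=\delta_{i0}$; $C\otimes C$ has the tensor product coalgebra structure; Sweedler notation $\Delta(b)=b_{(1)}\otimes b_{(2)}$. For linear maps $\mathfrak p,\mathfrak d\colon C\otimes C\to C$ write $a\cdot b=\mathfrak p(a\otimes b)$, $a:b=\mathfrak d(a\otimes b)$, $\mathfrak p(x_i\otimes x_j)=\sum_{k=0}^{n-1}\mathfrak p_{ij}^kx_k$, $\mathfrak d(x_i\otimes x_j)=\sum_{k=0}^{n-1}\mathfrak d_{ij}^kx_k$. A triple $(C,\mathfrak p,\mathfrak d)$ with $\mathfrak p,\mathfrak d$ coalgebra morphisms is a regular $q$-magma coalgebra if there are coalgebra morphisms $a\otimes b\mapsto a^b$, $a\otimes b\mapsto a_b$ from $C\otimes C$ to $C$ with $a^{b_{(1)}}\cdot b_{(2)}=(a\cdot b_{(1)})^{b_{(2)}}=\epsilon(b)a$ and $(a:b_{(2)})_{b_{(1)}}=a_{b_{(2)}}:b_{(1)}=\epsilon(b)a$. It is a regular $q$-cycle coalgebra if moreover for all $a,b,c$: (1) $(a\cdot b_{(1)})\cdot(c:b_{(2)})=(a\cdot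 c_{(2)})\cdot(b\cdot c_{(1)})$; (2) $(a\cdot b_{(1)}):(c\cdot b_{(2)})=(a:c_{(2)})\cdot(b:c_{(1)})$; (3) $(a:b_{(1)}):(c:b_{(2)})=(a:c_{(2)}):(b\cdot c_{(1)})$. *)

(* Defs.v *)
From HB Require Import structures.
From mathcomp Require Import all_boot all_order all_algebra.
Set Implicit Arguments. Unset Strict Implicit. Unset Printing Implicit Defensive.
Import GRing.Theory.
Local Open Scope ring_scope.

(* C = dual coalgebra of K[y]/(y^n): elements are row vectors 'rV[K]_n of
   coordinates in the basis x_0,...,x_{n-1}.  A linear map C (x) C -> C is
   given by its structure constants f i j k = f_{ij}^k. *)
Section QCycle.
Variables (K : fieldType) (n : nat).

Definition sconst := 'I_n -> 'I_n -> 'I_n -> K.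

Definition bas (i : 'I_n) : 'rV[K]_n := \row_k (i == k)%:R.

(* coordinate of v at x_m (0 if m >= n) *)
Definition coef (v : 'rV[K]_n) (m : nat) : K := \sum_(k < n | val k == m) v 0 k.

Definition counit (v : 'rV[K]_n) : K := coef v 0.

Definition bilin (f : sconst) (a b : 'rV[K]_n) : 'rV[K]_n :=
  \row_k \sum_(i < n) \sum_(j < n) a 0 i * b 0 j * f i j k.

Definition fc (f : sconst) (i j : 'I_n) (m : nat) : K :=
  \sum_(t < n | val t == m) f i j t.

(* Sweedler sum  E(b_(1), b_(2))  for E bilinear:
   Delta(b) = sum_{i+j<n} b_{i+j} x_i (x) x_j *)
Definition sweedler (b : 'rV[K]_n) (E : 'rV[K]_n -> 'rV[K]_n -> 'rV[K]_n)
  : 'rV[K]_n :=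
  \sum_(i < n) \sum_(j < n) coef b (i + j) *: E (bas i) (bas j).

(* f : C (x) C -> C is a coalgebra morphism (C (x) C with the tensor product
   coalgebra structure), written on the basis x_i (x) x_j:
   Delta(f(x_i (x) x_j)) = (f (x) f)(Delta(x_i (x) x_j)) and
   eps(f(x_i (x) x_j)) = eps(x_i) eps(x_j). *)
Definition coalg_mor (f : sconst) : Prop :=
  (forall i j k l : 'I_n,
     fc f i j (k + l) =
     \sum_(a < n) \sum_(b < n) \sum_(c < n) \sum_(d < n)
        (if ((a + b == i) && (c + d == j))%N then f a c k * f b d l else 0))
  /\ (forall i j : 'I_n, fc f i j 0 = ((val i == 0%N) && (val j == 0%N))%:R).

(* regular q-magma coalgebra (C, p, d); u is a (x) b |-> a^b, l is a (x) b |-> a_b *)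
Definition regular_qmagma (p d : sconst) : Prop :=
  coalg_mor p /\ coalg_mor d /\
  exists u l : sconst, coalg_mor u /\ coalg_mor l /\
   forall a b : 'rV[K]_n,
    [/\ sweedler b (fun b1 b2 => bilin p (bilin u a b1) b2) = counit b *: a,
        sweedler b (fun b1 b2 => bilin u (bilin p a b1) b2) = counit b *: a,
        sweedler b (fun b1 b2 => bilin l (bilin d a b2) b1) = counit b *: a &
        sweedler b (fun b1 b2 => bilin d (bilin l a b2) b1) = counit b *: a].

Definition regular_qcycle (p d : sconst) : Prop :=
  regular_qmagma p d /\
  forall a b c : 'rV[K]_n,
  [/\ sweedler b (fun b1 b2 => bilin p (bilin p a b1) (bilin d c b2)) =
      sweedler c (fun c1 c2 => bilin p (bilin p a c2) (bilin p b c1)),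
      sweedler b (fun b1 b2 => bilin d (bilin p a b1) (bilin p c b2)) =
      sweedler c (fun c1 c2 => bilin p (bilin d a c2) (bilin d b c1)) &
      sweedler b (fun b1 b2 => bilin d (bilin d a b1) (bilin d c b2)) =
      sweedler c (fun c1 c2 => bilin d (bilin d a c2) (bilin p b c1))].

End QCycle.

(* Main.v *)
Require Import Defs.
From HB Require Import structures.
From mathcomp Require Import all_boot all_order all_algebra.
From mathcomp Require Import ring zify.
Import GRing.Theory.
Local Open Scope ring_scope.
Set Implicit Arguments. Unset Strict Implicit. Unset Printing Implicit Defensive.

Section Nat.
Variables (K : fieldType) (n : nat) (f : 'I_n -> 'I_n -> 'I_n -> K).

Definition F (i j m : nat) : K :=
  match (insub i : option 'I_n), (insub j : option 'I_n), (insub m : option 'I_n) with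
  | Some a, Some b, Some c => f a b c
  | _, _, _ => 0 end.

Lemma Fval (a b c : 'I_n) : F a b c = f a b c.
Proof. by rewrite /F !valK. Qed.

Lemma Fout i j m : (n <= i)%N || (n <= j)%N || (n <= m)%N -> F i j m = 0.
Proof.
rewrite /F => H.
case: insubP => [a Ha ea|]; last by move=> _; reflexivity.
case: insubP => [b Hb eb|]; last by move=> _; reflexivity.
case: insubP => [c Hc ec|]; last by move=> _; reflexivity.
exfalso; move: H Ha Hb Hc; lia.
Qed.

Lemma fcF (a b : 'I_n) m : fc f a b m = F a b m.
Proof.
rewrite /fc; case: (ltnP m n) => Hm.
- rewrite (bigD1 (Ordinal Hm)) //= big1 ?addr0; first by rewrite -(Fval a b (Ordinal Hm)).
  move=> t /andP[/eqP ht ne]; exfalso; move/negP: ne; apply; apply/eqP/val_inj => /=.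
  exact: ht.
- rewrite big1 ?Fout ?Hm ?orbT // => t /eqP ht; exfalso; have := ltn_ord t; simpl in *; lia.
Qed.

Hypothesis Hf : coalg_mor f.

Lemma counitN i j : (i < n)%N -> (j < n)%N -> F i j 0 = ((i == 0%N) && (j == 0%N))%:R.
Proof.
move=> Hi Hj; have := Hf.2 (Ordinal Hi) (Ordinal Hj); by rewrite fcF.
Qed.

Lemma coalgN i j k l : (i < n)%N -> (j < n)%N -> (k < n)%N -> (l < n)%N ->
  F i j (k + l) = \sum_(a < i.+1) \sum_(c < j.+1) F a c k * F (i - a) (j - c) l.
Proof.
move=> Hi Hj Hk Hl.
have := (Hf.1 (Ordinal Hi) (Ordinal Hj) (Ordinal Hk) (Ordinal Hl)); rewrite fcF /= => ->.
rewrite (big_ord_widen n (fun a => \sum_(c < j.+1) F a c k * F (i - a) (j - c) l) Hi) [X in _ = X]big_mkcond /=.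
apply eq_bigr => a _; rewrite exchange_big /=.
rewrite (big_ord_widen n (fun c => F a c k * F (i - a) (j - c) l) Hj) [in X in _ = X]big_mkcond /=.
case: (ltnP a i.+1) => Ha.
- apply eq_bigr => c _; case: ltnP => Hc.
  + have Hb : (i - a < n)%N by lia.
    have Hd : (j - c < n)%N by lia.
    rewrite (bigD1 (Ordinal Hb)) //= (bigD1 (Ordinal Hd)) //= big1 ?addr0.
    * rewrite big1 ?addr0.
      - have -> : (a + (i - a) == i)%N by apply/eqP; lia.
        have -> : (c + (j - c) == j)%N by apply/eqP; lia.
        by rewrite /= -!Fval.
      - move=> b Hb'; rewrite big1 // => d _.
        have -> : (a + b == i)%N = false.
          apply/negbTE/eqP => E; move/negP: Hb'; apply; apply/eqP/val_inj => /=; lia.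
        by [].
    * move=> d Hd'.
      have -> : (c + d == j)%N = false.
        apply/negbTE/eqP => E; move/negP: Hd'; apply; apply/eqP/val_inj => /=; lia.
      by rewrite andbF.
  + rewrite big1 // => b _; rewrite big1 // => d _.
    have -> : (c + d == j)%N = false by apply/negbTE/eqP; lia.
    by rewrite andbF.
- rewrite big1 // => c _; rewrite big1 // => b _; rewrite big1 // => d _.
  have -> : (a + b == i)%N = false by apply/negbTE/eqP; lia.
  by [].
Qed.


Hypothesis Hn : (1 < n)%N.

Lemma F001 : F 0 0 1 = 0.
Proof.
have H0 : (0 < n)%N by lia.
have cpow : forall m, (m < n)%N -> F 0 0 m = F 0 0 1 ^+ m.
  elim=> [|m IH] Hm.
  - by rewrite counitN // expr0.
  - rewrite -addn1 coalgN //; try lia.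
    rewrite !big_ord1 /= IH; last by lia.
    by rewrite subnn addn1 exprSr.
have Hp : (n.-1 < n)%N by lia.
have E := coalgN H0 H0 Hp Hn.
have e : (n.-1 + 1 = n)%N by lia.
rewrite e Fout ?leqnn ?orbT // !big_ord1 /= cpow // in E.
have : F 0 0 1 ^+ n = 0 by rewrite -e exprD expr1 E.
by move/eqP; rewrite expf_eq0 => /andP[_ /eqP].
Qed.

Lemma L1 m : forall i j, (i + j < m)%N -> F i j m = 0.
Proof.
elim: m => [|m IH] i j H; first by exfalso; lia.
case: (ltnP m.+1 n) => Hm; last by rewrite Fout ?Hm ?orbT.
case: (ltnP i n) => Hi; last by rewrite Fout ?Hi.
case: (ltnP j n) => Hj; last by rewrite Fout ?Hj ?orbT.
case: m IH Hm H => [|m] IH Hm H.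
- have -> : i = 0%N by lia.
  have -> : j = 0%N by lia.
  exact: F001.
- rewrite -(addn1 m.+1) coalgN //; try lia.
  rewrite big1 // => a _; rewrite big1 // => c _.
  have Ha := ltn_ord a; have Hc := ltn_ord c.
  case: (ltnP (a + c) m.+1) => Hac; first by rewrite IH // mul0r.
  have -> : (i - a = 0)%N by lia.
  have -> : (j - c = 0)%N by lia.
  by rewrite F001 mulr0.
Qed.

Definition alpha := F 1 0 1.
Definition beta := F 0 1 1.

Lemma T0 i : (i < n)%N -> F i 0 i = alpha ^+ i.
Proof.
elim: i => [|i IH] Hi; first by rewrite counitN //; lia.
have H0 : (0 < n)%N by lia.
have Hi' : (i < n)%N by lia.
have := coalgN Hi H0 Hi' Hn; rewrite addn1 => ->.
under eq_bigr => a _ do rewrite big_ord1 /=.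
rewrite !big_ord_recr /= big1 ?add0r; last first.
  by move=> a _; rewrite L1 ?mul0r //; have := ltn_ord a; lia.
rewrite !subnn F001 mulr0 addr0 IH //.
have -> : (i.+1 - i = 1)%N by lia.
by rewrite exprSr.
Qed.

Lemma Q i : (i.+1 < n)%N -> F i 1 i.+1 = i.+1%:R * alpha ^+ i * beta ->
  F i.+1 1 i.+2 = i.+2%:R * alpha ^+ i.+1 * beta.
Proof.
move=> Hi IH.
have Hi' : (i < n)%N by lia.
have := coalgN Hi Hn Hi Hn; rewrite addn1 => ->.
under eq_bigr => a _ do rewrite big_ord_recr big_ord1 /=.
rewrite !big_ord_recr /= big1; last first.
  move=> a _; have := ltn_ord a => Ha.
  rewrite (@L1 i.+1 a 0) ?(@L1 i.+1 a 1) ?mul0r ?addr0 //; lia.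
rewrite !subnn (L1 (i := i) (j := 0)); last by lia.
have -> : (i.+1 - i = 1)%N by lia.
rewrite IH (T0 (i := i.+1)) // F001 -/alpha -/beta.
rewrite add0r.
rewrite !mulr0 !mul0r !addr0 add0r.

rewrite !mulrS !exprS.
ring.
Qed.

Lemma T1 i : (i.+1 < n)%N -> F i 1 i.+1 = i.+1%:R * alpha ^+ i * beta.
Proof.
elim: i => [|i IH] Hi; first by rewrite expr0 mulr1 mul1r.
apply: Q; first by lia.
apply: IH; lia.
Qed.

Lemma beta0 : [pchar K] =i pred0 -> alpha != 0 -> beta = 0.
Proof.
move=> Hc Ha.
have Hp : (n.-2.+1 < n)%N by lia.
have E := Q Hp (T1 Hp).
have e : (n.-2.+2 = n)%N by lia.
rewrite e Fout ?leqnn ?orbT // in E.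
move/esym/eqP: E; rewrite !mulf_eq0 expf_eq0 (negbTE Ha) andbF orbF.
rewrite ((pcharf0P K).1 Hc) => /orP[/eqP|/eqP //]; lia.
Qed.

Lemma F112 : beta = 0 -> F 1 1 2 = 0.
Proof.
move=> Hb; case: (ltnP 2 n) => H2; last by rewrite Fout ?H2 ?orbT.
rewrite -[2%N]/(1 + 1)%N coalgN //.
rewrite !big_ord_recr !big_ord0 /= !add0r.
rewrite -/(beta) Hb F001.
by rewrite !mulr0 !mul0r !addr0.
Qed.
End Nat.

Section Ord.
Variables (K : fieldType) (n : nat) (i0 i1 : 'I_n).
Hypotheses (e0 : val i0 = 0%N) (e1 : val i1 = 1%N).
Local Notation bas := (@bas K n).
Lemma e0n : nat_of_ord i0 = 0%N. Proof. exact: e0. Qed.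
Lemma e1n : nat_of_ord i1 = 1%N. Proof. exact: e1. Qed.
Lemma ord_eq (a b : 'I_n) : nat_of_ord a = nat_of_ord b -> a = b.
Proof. exact: val_inj. Qed.

Lemma Hn : (1 < n)%N.
Proof. have := ltn_ord i1; rewrite e1; lia. Qed.

Lemma i01 : i0 != i1.
Proof. by apply/negP => /eqP h; move: e1; rewrite -h e0. Qed.

Lemma sum1 (V : zmodType) (G : 'I_n -> V) x :
  (forall s, s != x -> G s = 0) -> \sum_s G s = G x.
Proof. by move=> H; rewrite (bigD1 x) //= big1 ?addr0. Qed.

Lemma sum2 (V : zmodType) (G : 'I_n -> V) :
  (forall s, s != i0 -> s != i1 -> G s = 0) -> \sum_s G s = G i0 + G i1.
Proof.
move=> H; rewrite (bigD1 i0) //= (bigD1 i1) /=; last by rewrite eq_sym i01.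
rewrite big1 ?addr0 // => s /andP[h0 h1]; exact: H.
Qed.

Lemma bilin_row (g : sconst K n) (A B : 'I_n -> K) m :
  (bilin g (\row_k A k) (\row_k B k)) 0 m = \sum_s \sum_t A s * B t * g s t m.
Proof. by rewrite mxE; apply eq_bigr => s _; apply eq_bigr => t _; rewrite !mxE. Qed.

Lemma bilin_bas (g : sconst K n) i j : bilin g (bas i) (bas j) = \row_k g i j k.
Proof.
apply/rowP => k; rewrite /bas bilin_row mxE (sum1 (x := i)).
- rewrite (sum1 (x := j)); first by rewrite !eqxx mul1r mul1r.
  by move=> t ht; rewrite (_ : (j == t) = false) ?mulr0 ?mul0r // eq_sym; apply/negbTE.
- move=> s hs; rewrite big1 // => t _.
  by rewrite (_ : (i == s) = false) ?mulr0 ?mul0r // eq_sym; apply/negbTE.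
Qed.

Lemma comp (f g h : sconst K n) i j k l m
  (Sg : forall s, s != i0 -> s != i1 -> g i j s = 0)
  (Sh : forall s, s != i0 -> s != i1 -> h k l s = 0) :
  (bilin f (bilin g (bas i) (bas j)) (bilin h (bas k) (bas l))) 0 m =
  g i j i0 * (h k l i0 * f i0 i0 m + h k l i1 * f i0 i1 m) +
  g i j i1 * (h k l i0 * f i1 i0 m + h k l i1 * f i1 i1 m).
Proof.
rewrite !bilin_bas bilin_row sum2; last first.
  by move=> s h0 h1; rewrite big1 // => t _; rewrite Sg // !mul0r.
rewrite !sum2; try by move=> t h0 h1; rewrite Sh // mulr0 mul0r.
by rewrite !mulrDr !mulrA.
Qed.

Lemma comp' (f g : sconst K n) i j k m
  (Sg : forall s, s != i0 -> s != i1 -> g i j s = 0) :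
  (bilin f (bilin g (bas i) (bas j)) (bas k)) 0 m =
  g i j i0 * f i0 k m + g i j i1 * f i1 k m.
Proof.
rewrite bilin_bas {1}/bas bilin_row sum2; last first.
  by move=> s h0 h1; rewrite big1 // => t _; rewrite Sg // !mul0r.
rewrite !(sum1 (x := k)); try by move=> t h; rewrite (_ : (k == t) = false) ?mulr0 ?mul0r // eq_sym; apply/negbTE.
by rewrite !eqxx !mulr1.
Qed.

Lemma coef_bas (i : 'I_n) m : coef (bas i) m = (nat_of_ord i == m)%:R.
Proof.
rewrite /coef; case: (boolP (val i == m)) => h.
- rewrite (bigD1 i) //= big1 ?addr0; first by rewrite mxE eqxx.
  move=> k /andP[hk hki]; rewrite mxE (_ : (i == k) = false) //.
  apply/negbTE; rewrite eq_sym; exact: hki.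
- rewrite big1 // => k hk; rewrite mxE (_ : (i == k) = false) //.
  apply/negbTE/negP => /eqP hik; move/negP: h; apply; by rewrite hik.
Qed.

Lemma sw0 E : sweedler (bas i0) E = E (bas i0) (bas i0).
Proof.
rewrite /sweedler (sum1 (x := i0)).
- rewrite (sum1 (x := i0)); first by rewrite coef_bas ?e0n eqxx scale1r.
  move=> t ht; rewrite coef_bas ?e0n (_ : (0 == 0 + t)%N = false) ?scale0r //.
  apply/negbTE/negP => /eqP h; move/negP: ht; apply; apply/eqP; apply: ord_eq; rewrite ?e0n ?e1n; lia.
- move=> s hs; rewrite big1 // => t _; rewrite coef_bas ?e0n (_ : (0 == s + t)%N = false) ?scale0r //.
  apply/negbTE/negP => /eqP h; move/negP: hs; apply; apply/eqP; apply: ord_eq; rewrite ?e0n ?e1n; lia.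
Qed.

Lemma sw1 E : sweedler (bas i1) E = E (bas i0) (bas i1) + E (bas i1) (bas i0).
Proof.
rewrite /sweedler sum2.
- rewrite (sum1 (x := i1)); last first.
    move=> t ht; rewrite coef_bas ?e0n ?e1n (_ : (1 == 0 + t)%N = false) ?scale0r //.
    apply/negbTE/negP => /eqP h; move/negP: ht; apply; apply/eqP; apply: ord_eq; rewrite ?e0n ?e1n; lia.
  rewrite (sum1 (x := i0)); last first.
    move=> t ht; rewrite coef_bas ?e0n ?e1n (_ : (1 == 1 + t)%N = false) ?scale0r //.
    apply/negbTE/negP => /eqP h; move/negP: ht; apply; apply/eqP; apply: ord_eq; rewrite ?e0n ?e1n; lia.
  by rewrite !coef_bas ?e0n ?e1n !scale1r.
- move=> s h0 h1; rewrite big1 // => t _; rewrite coef_bas ?e1n (_ : (1 == s + t)%N = false) ?scale0r //.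
  apply/negbTE/negP => /eqP h.
  have : nat_of_ord s = 0%N \/ nat_of_ord s = 1%N by lia.
  case=> hs; [move/negP: h0|move/negP: h1]; apply; apply/eqP; apply: ord_eq; rewrite ?e0n ?e1n; lia.
Qed.

End Ord.

Section Supp.
Variables (K : fieldType) (n : nat) (i0 i1 : 'I_n).
Hypotheses (e0 : val i0 = 0%N) (e1 : val i1 = 1%N).
Variables (f : sconst K n) (Hf : coalg_mor f).
Let z0 : nat_of_ord i0 = 0%N := e0.
Let z1 : nat_of_ord i1 = 1%N := e1.

Lemma neq0 s : s != i0 -> (0 < nat_of_ord s)%N.
Proof.
move=> h; rewrite lt0n; apply/negP => /eqP h'; move/negP: h; apply; apply/eqP.
by apply: ord_eq; rewrite h' z0.
Qed.

Lemma neq01 s : s != i0 -> s != i1 -> (1 < nat_of_ord s)%N.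
Proof.
move=> h0 h1; have := neq0 h0 => h.
rewrite ltn_neqAle h andbT; apply/negP => /eqP h'; move/negP: h1; apply; apply/eqP.
by apply: ord_eq; rewrite -h' z1.
Qed.

Lemma supp00 s : s != i0 -> f i0 i0 s = 0.
Proof. move=> h; rewrite -Fval (L1 Hf (Hn e0 e1)) // z0; have := neq0 h; lia. Qed.
Lemma supp10 s : s != i0 -> s != i1 -> f i1 i0 s = 0.
Proof. move=> h0 h1; rewrite -Fval (L1 Hf (Hn e0 e1)) // z0 z1; have := neq01 h0 h1; lia. Qed.
Lemma supp01 s : s != i0 -> s != i1 -> f i0 i1 s = 0.
Proof. move=> h0 h1; rewrite -Fval (L1 Hf (Hn e0 e1)) // z0 z1; have := neq01 h0 h1; lia. Qed.
Lemma supp11 : beta f = 0 -> forall s, s != i0 -> s != i1 -> f i1 i1 s = 0.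
Proof.
move=> hb s h0 h1; rewrite -Fval z1; have := neq01 h0 h1 => h.
case: (ltnP 2 (nat_of_ord s)) => h2; first by rewrite (L1 Hf (Hn e0 e1)).
have -> : nat_of_ord s = 2%N by lia.
exact: (F112 Hf (Hn e0 e1) hb).
Qed.

Lemma v000 : f i0 i0 i0 = 1.
Proof. by rewrite -Fval z0 counitN //= ?mulr1n //; have := Hn e0 e1; lia. Qed.
Lemma v100 : f i1 i0 i0 = 0.
Proof. by rewrite -Fval z0 z1 counitN //= ?mulr0n //; have := Hn e0 e1; lia. Qed.
Lemma v010 : f i0 i1 i0 = 0.
Proof. by rewrite -Fval z0 z1 counitN //= ?mulr0n //; have := Hn e0 e1; lia. Qed.
Lemma v110 : f i1 i1 i0 = 0.
Proof. by rewrite -Fval z0 z1 counitN //= ?mulr0n //; have := Hn e0 e1; lia. Qed.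
Lemma v001 : f i0 i0 i1 = 0.
Proof. by rewrite -Fval z0 z1 (F001 Hf (Hn e0 e1)). Qed.
Lemma v011 : beta f = 0 -> f i0 i1 i1 = 0.
Proof. by rewrite -Fval z0 z1. Qed.
Lemma alphaE : alpha f = f i1 i0 i1.
Proof. by rewrite /alpha -Fval z0 z1. Qed.

Lemma beta0' : [pchar K] =i pred0 -> f i1 i0 i1 != 0 -> beta f = 0.
Proof. move=> Hc Ha; apply: (beta0 Hf (Hn e0 e1) Hc); by rewrite alphaE. Qed.

End Supp.

Lemma addrow (K : fieldType) n (A B : 'rV[K]_n) m : (A + B) 0 m = A 0 m + B 0 m.
Proof. by rewrite mxE. Qed.


Unset Implicit Arguments.
Set Strict Implicit.

Theorem proposition2p2 (K : closedFieldType) (n : nat)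
  (p d : 'I_n -> 'I_n -> 'I_n -> K) :
  [pchar K] =i pred0 -> (1 < n)%N -> regular_qcycle p d ->
  forall i0 i1 : 'I_n, val i0 = 0%N -> val i1 = 1%N ->
  (d i1 i0 i1 = 1 /\ p i1 i0 i1 = 1) \/ (d i1 i1 i1 = 0 /\ p i1 i1 i1 = 0).
Proof.
move=> Hc _ [[Hp [Hd [u [l [Hu [Hl Hreg]]]]]] Hcyc] i0 i1 e0 e1.
have z0 : nat_of_ord i0 = 0%N := e0.
have z1 : nat_of_ord i1 = 1%N := e1.
have bas11 : (@bas K n i1) 0 i1 = 1 by rewrite mxE eqxx.
have cnt0 : counit (@bas K n i0) = 1 by rewrite /counit coef_bas z0 eqxx.
have [Ha u1] : p i1 i0 i1 != 0 /\ True.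
  have [h1 _ _ _] := Hreg (bas K i1) (bas K i0).
  move/(congr1 (fun v : 'rV[K]_n => v 0 i1)): h1.
  rewrite (sw0 e0 e1) /= (comp' e0 e1); last exact: (supp10 e0 e1 Hu).
  rewrite (v100 e0 e1 Hu) mul0r add0r mxE cnt0 bas11 mulr1 => h.
  split=> //; apply/eqP => h'; move: h; rewrite h' mulr0 => /eqP; by rewrite eq_sym oner_eq0.
have [Ha' u2] : d i1 i0 i1 != 0 /\ True.
  have [_ _ h1 _] := Hreg (bas K i1) (bas K i0).
  move/(congr1 (fun v : 'rV[K]_n => v 0 i1)): h1.
  rewrite (sw0 e0 e1) /= (comp' e0 e1); last exact: (supp10 e0 e1 Hd).
  rewrite (v100 e0 e1 Hd) mul0r add0r mxE cnt0 bas11 mulr1 => h.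
  split=> //; apply/eqP => h'; move: h; rewrite mulrC h' mulr0 => /eqP; by rewrite eq_sym oner_eq0.
have hbp := beta0' e0 e1 Hp Hc Ha.
have hbd := beta0' e0 e1 Hd Hc Ha'.
have [c1 _ c3] := Hcyc (bas K i1) (bas K i1) (bas K i0).
have [c1' _ c3'] := Hcyc (bas K i1) (bas K i0) (bas K i1).
move/(congr1 (fun v : 'rV[K]_n => v 0 i1)): c1; move/(congr1 (fun v : 'rV[K]_n => v 0 i1)): c3.
move/(congr1 (fun v : 'rV[K]_n => v 0 i1)): c1'; move/(congr1 (fun v : 'rV[K]_n => v 0 i1)): c3'.
rewrite !(sw0 e0 e1) !(sw1 e0 e1) /= !addrow !(comp e0 e1).
all: try (move=> s h0 h1; first [exact: (supp10 e0 e1 Hp h0 h1) | exact: (supp01 e0 e1 Hp h0 h1)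
  | exact: (supp11 e0 e1 Hp hbp h0 h1) | exact: (supp00 e0 e1 Hp h0)
  | exact: (supp10 e0 e1 Hd h0 h1) | exact: (supp01 e0 e1 Hd h0 h1)
  | exact: (supp11 e0 e1 Hd hbd h0 h1) | exact: (supp00 e0 e1 Hd h0)]).
rewrite ?(v000 e0 e1 Hp) ?(v100 e0 e1 Hp) ?(v010 e0 e1 Hp) ?(v110 e0 e1 Hp) ?(v001 e0 e1 Hp) ?(v011 e0 e1 hbp).
rewrite ?(v000 e0 e1 Hd) ?(v100 e0 e1 Hd) ?(v010 e0 e1 Hd) ?(v110 e0 e1 Hd) ?(v001 e0 e1 Hd) ?(v011 e0 e1 hbd).

move=> c3' c1' c3 c1.
have h1 : p i1 i0 i1 * (p i1 i1 i1 * (p i1 i0 i1 - 1)) = 0.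
  by move/eqP: c1; rewrite -subr_eq0 => /eqP e; rewrite -oppr0 -e; ring.
have h2 : p i1 i0 i1 * (p i1 i1 i1 * (1 - d i1 i0 i1)) = 0.
  by move/eqP: c1'; rewrite -subr_eq0 => /eqP e; rewrite -oppr0 -e; ring.
have h3 : d i1 i0 i1 * (d i1 i1 i1 * (p i1 i0 i1 - 1)) = 0.
  by move/eqP: c3; rewrite -subr_eq0 => /eqP e; rewrite -oppr0 -e; ring.
have h4 : d i1 i0 i1 * (d i1 i1 i1 * (1 - d i1 i0 i1)) = 0.
  by move/eqP: c3'; rewrite -subr_eq0 => /eqP e; rewrite -oppr0 -e; ring.
move/eqP: h1; rewrite !mulf_eq0 (negbTE Ha) subr_eq0 /= => g1.
move/eqP: h2; rewrite !mulf_eq0 (negbTE Ha) subr_eq0 (eq_sym (1 : K)) /= => g2.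
move/eqP: h3; rewrite !mulf_eq0 (negbTE Ha') subr_eq0 /= => g3.
move/eqP: h4; rewrite !mulf_eq0 (negbTE Ha') subr_eq0 (eq_sym (1 : K)) /= => g4.
case: (boolP (p i1 i0 i1 == 1)) => A; case: (boolP (d i1 i0 i1 == 1)) => A'.
- by left; split; apply/eqP.
- by right; move: g2 g4; rewrite (negbTE A') !orbF => /eqP -> /eqP ->.
- by right; move: g1 g3; rewrite (negbTE A) !orbF => /eqP -> /eqP ->.
- by right; move: g1 g3; rewrite (negbTE A) !orbF => /eqP -> /eqP ->.
Qed.
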